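(* Let $X_n$ be the maximum weight of a directed path from $1$ to $n$ in the transitive tournament on $\{1,\ldots,n\}$ with independent $\mathrm{Bernoulli}(1/2)$ edge weights. Then \[ \lim_{n\to\infty}\frac{\mathbb{E}[X_n]}{n-1}=\Big(\sum_{n\ge1}2^{-\binom{n}{2}}\Big)^{-1}=0.60914971106\ldots \]
   Context: The transitive tournament on $\{1,\ldots,n\}$ has a directed edge $(i,j)$ for every $1\le i<j\le n$. Each edge independently has weight $1$ with probability $1/2$ and weight $0$ otherwise. The weight of a path is the sum of its edge weights. *)

(* Defs.v *)
From HB Require Import structures.
From mathcomp Require Import all_boot all_order all_algebra.
From mathcomp Require Import all_classical all_reals all_analysis.
Set Implicit Arguments. Unset Strict Implicit. Unset Printing Implicit Defensive.
Import Order.TTheory GRing.Theory Num.Theory.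

(* Vertices of the transitive tournament on {1,...,n} are represented by
   'I_n = {0,...,n-1} (vertex k+1 <-> ordinal k). *)

Definition edge (n : nat) := {e : 'I_n * 'I_n | (e.1 < e.2)%N}.

Definition weighting (n : nat) := {ffun edge n -> bool}.

Definition ewt n (w : weighting n) (i j : 'I_n) : nat :=
  match insub (i, j) : option (edge n) with
  | Some e => nat_of_bool (w e)
  | None => 0
  end.

(* Directed paths from vertex 1 to vertex n: in a transitive tournament a
   directed path is determined by its vertex set S (visited in increasing
   order), which must contain the endpoints 1 and n. *)
Definition endpoints_in n (S : {set 'I_n}) : bool :=
  [forall i : 'I_n, ((val i == 0)%N || (val i == n.-1)%N) ==> (i \in S)].

Definition path_vertices n (S : {set 'I_n}) : seq 'I_n :=
  sort (fun i j : 'I_n => (i <= j)%N) (enum S).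

Definition path_weight n (w : weighting n) (S : {set 'I_n}) : nat :=
  let s := path_vertices S in
  \sum_(p <- zip s (behead s)) ewt w p.1 p.2.

Definition Xmax n (w : weighting n) : nat :=
  \max_(S : {set 'I_n} | endpoints_in S) path_weight w S.

(* E[X_n] for independent Bernoulli(1/2) weights = uniform average over
   all 2^(#edges) weightings. *)
Definition EX (R : realType) (n : nat) : R :=
  (\sum_(w : weighting n) (Xmax w)%:R) / (#|{: weighting n}|)%:R.

(* Main.v *)
Require Import Defs.
From HB Require Import structures.
From mathcomp Require Import all_boot all_order all_algebra.
From mathcomp Require Import all_classical all_reals all_analysis.
From mathcomp Require Import zify.
Set Implicit Arguments. Unset Strict Implicit. Unset Printing Implicit Defensive.

Definition ew n' (w : weighting n'.+1) (i j : nat) : nat := ewt w (inord i) (inord j).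

Fixpoint noinc n' (w : weighting n'.+1) (v K : nat) : bool :=
  match K with
  | 0 => true
  | K'.+1 => noinc w v K' && (ew w (v - K') v.+1 == 0)
  end.

Fixpoint gs n' (w : weighting n'.+1) (v : nat) : nat * nat :=
  match v with
  | 0 => (0, 0)
  | v'.+1 => let p := gs w v' in
      if noinc w v' (v' - p.2).+1 then p else (p.1.+1, v'.+1)
  end.

Definition G n' (w : weighting n'.+1) v := (gs w v).1.
Definition S n' (w : weighting n'.+1) v := (gs w v).2.

Lemma ewt_le1 n (w : weighting n) x y : ewt w x y <= 1.
Proof. by rewrite /ewt; case: insub => [e|] //; apply: leq_b1. Qed.

Lemma ewt_ew n' (w : weighting n'.+1) (x y : 'I_n'.+1) : ewt w x y = ew w x y.
Proof. by rewrite /ew !inord_val. Qed.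

Lemma ewt_diag n (w : weighting n) x : ewt w x x = 0.
Proof. by rewrite /ewt insubN //= ltnn. Qed.

Lemma noinc_false n' (w : weighting n'.+1) v K k :
  k < K -> ew w (v - k) v.+1 != 0 -> noinc w v K = false.
Proof.
elim: K => // K IH; rewrite ltnS leq_eqVlt => /orP [/eqP ->|hk] hne /=.
  by rewrite (negbTE hne) andbF.
by rewrite IH.
Qed.


Lemma noinc_falseE n' (w : weighting n'.+1) v K :
  noinc w v K = false -> exists k, k < K /\ ew w (v - k) v.+1 != 0.
Proof.
elim: K => // K IH /=.
case h1: (noinc w v K) => /=.
  by move/negbT => h; exists K; split.
by move=> _; case: (IH h1) => k [hk hne]; exists k; split => //; apply: ltnW.
Qed.

Lemma noinc_ext n' (w w' : weighting n'.+1) v K :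
  (forall k, k < K -> ew w (v - k) v.+1 = ew w' (v - k) v.+1) ->
  noinc w v K = noinc w' v K.
Proof.
elim: K => // K IH h /=; rewrite IH ?h //.
by move=> k hk; apply: h; apply: ltnW.
Qed.

Lemma gsS n' (w : weighting n'.+1) v :
  gs w v.+1 = if noinc w v (v - S w v).+1 then gs w v else ((G w v).+1, v.+1).
Proof. by []. Qed.

Lemma S_le n' (w : weighting n'.+1) v : S w v <= v.
Proof.
elim: v => // v IH; rewrite /S gsS.
by case: ifP => _ //=; apply: leqW.
Qed.

Lemma G_step n' (w : weighting n'.+1) v :
  G w v.+1 = G w v + (S w v.+1 == v.+1).
Proof.
rewrite /G /S gsS; case: ifP => _ /=; last by rewrite eqxx addn1.
have := S_le w v; rewrite /S => h.
by rewrite (_ : (_ == _) = false) ?addn0 //; apply/negbTE; rewrite neq_ltn ltnS h.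
Qed.

Lemma G_mono_eq n' (w : weighting n'.+1) v i :
  i <= v -> G w i <= G w v /\ ((G w i == G w v) = (S w v <= i)).
Proof.
elim: v i => [|v IH] i.
  by rewrite leqn0 => /eqP ->; rewrite /G /S /= eqxx.
rewrite leq_eqVlt => /orP [/eqP ->|]; first by rewrite eqxx S_le.
rewrite ltnS => hi; have [h1 h2] := IH i hi.
rewrite /G /S gsS; case: ifP => _ /=; first by [].
split; first by apply: leqW.
rewrite (_ : (_ == _) = false); last by apply/negbTE; rewrite neq_ltn ltnS h1.
by apply/esym/negbTE; rewrite -ltnNge ltnS.
Qed.

Lemma F4 n' (w : weighting n'.+1) v i :
  i <= v -> G w i + ew w i v.+1 <= G w v.+1.
Proof.
move=> hiv; have [h1 h2] := G_mono_eq w hiv.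
have hle := ewt_le1 w (inord i) (inord v.+1); rewrite -/(ew w i v.+1) in hle.
have hm : G w v <= G w v.+1 by rewrite G_step leq_addr.
case e: (G w i == G w v); last first.
  have hlt : G w i < G w v by rewrite ltn_neqAle e h1.
  lia.
have hS : S w v <= i by rewrite -h2 e.
move/eqP: e => e.
case e0: (ew w i v.+1 == 0); first by move/eqP: e0 => ->; rewrite addn0; apply: leq_trans hm.
have hn : noinc w v (v - S w v).+1 = false.
  apply: (@noinc_false _ _ _ _ (v - i)); first by rewrite ltnS; apply: leq_sub2l.
  by rewrite subKn // e0.
rewrite /G gsS hn /=; rewrite -/(G w v) -/(G w i) e; lia.
Qed.


Lemma F4o n' (w : weighting n'.+1) (x y : 'I_n'.+1) :
  (x <= y)%N -> G w x + ewt w x y <= G w y.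
Proof.
rewrite leq_eqVlt => /orP [/eqP h|h].
  have -> : x = y by apply: val_inj.
  by rewrite ewt_diag addn0.
rewrite ewt_ew; have -> : (y : nat) = (y.-1).+1 by rewrite prednK //; apply: leq_ltn_trans h.
by apply: F4; rewrite -ltnS prednK //; apply: leq_ltn_trans h.
Qed.

Fixpoint pw n (w : weighting n) (x : 'I_n) (L : seq 'I_n) : nat :=
  match L with
  | [::] => 0
  | y :: L' => ewt w x y + pw w y L'
  end.

Lemma pw_sum n (w : weighting n) x L :
  \sum_(p <- zip (x :: L) L) ewt w p.1 p.2 = pw w x L.
Proof.
elim: L x => [|y L IH] x; first by rewrite big_nil.
by rewrite /= big_cons /= -IH.
Qed.

Lemma pw_rcons n (w : weighting n) x L z :
  pw w x (rcons L z) = pw w x L + ewt w (last x L) z.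
Proof.
elim: L x => [|y L IH] x /=; first by rewrite addn0.
by rewrite IH addnA.
Qed.

Definition leo n := fun i j : 'I_n => (i <= j)%N.
Definition lto n := fun i j : 'I_n => (i < j)%N.

Lemma pw_upper n' (w : weighting n'.+1) x L :
  sorted (@leo n'.+1) (x :: L) -> pw w x L + G w x <= G w (last x L).
Proof.
elim: L x => [|y L IH] x /=; first by [].
move=> /andP [hxy hp].
have := IH y hp; have := F4o w hxy; lia.
Qed.

Lemma path_weight_le n' (w : weighting n'.+1) (S0 : {set 'I_n'.+1}) :
  path_weight w S0 <= G w n'.
Proof.
rewrite /path_weight.
have : sorted (@leo n'.+1) (path_vertices S0).
  by apply: sort_sorted => i j; apply: leq_total.
case: (path_vertices S0) => [|x L]; first by rewrite big_nil.
move=> hs; rewrite /= pw_sum.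
apply: leq_trans (leq_addr (G w x) _) _.
apply: leq_trans (pw_upper w hs) _.
by case: (G_mono_eq w (ltn_ord (last x L) : (last x L : nat) <= n')).
Qed.

Lemma path_exists n' (w : weighting n'.+1) v :
  v <= n' -> forall i, i <= v -> exists L : seq 'I_n'.+1,
    [/\ sorted (@lto n'.+1) (ord0 :: L), (last ord0 L : nat) = i & G w i <= pw w ord0 L].
Proof.
elim: v => [|v IH] hv i.
  by rewrite leqn0 => /eqP ->; exists [::]; split.
rewrite leq_eqVlt => /orP [/eqP ->|]; last by rewrite ltnS; apply: IH; apply: ltnW.
have hv' : v <= n' by apply: ltnW.
set z : 'I_n'.+1 := inord v.+1.
have hz : (z : nat) = v.+1 by rewrite /z inordK.
case hn: (noinc w v (v - S w v).+1).
  have [L [h1 h2 h3]] := IH hv' v (leqnn v).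
  exists (rcons L z); split.
  - by move: h1 => /= h1; rewrite rcons_path h1 /lto h2 hz /=.
  - by rewrite last_rcons.
  - by rewrite pw_rcons /G gsS hn; apply: leq_trans (leq_addr _ _).
have [k [hk hne]] := noinc_falseE hn.
have hSv := S_le w v.
have hi : v - k <= v by apply: leq_subr.
have [L [h1 h2 h3]] := IH hv' (v - k) hi.
have [_ hGe] := G_mono_eq w hi.
have hSi : S w v <= v - k by lia.
move: hGe; rewrite hSi => /eqP hGe.
exists (rcons L z); split.
- by move: h1 => /= h1; rewrite rcons_path h1 /lto h2 hz /= ltnS.
- by rewrite last_rcons.
- rewrite pw_rcons /G gsS hn /= -/(G w v) -hGe ewt_ew h2 hz.
  have : 0 < ew w (v - k) v.+1 by rewrite lt0n.
  lia.
Qed.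

Lemma Xmax_eq n' (w : weighting n'.+1) : Xmax w = G w n'.
Proof.
apply/eqP; rewrite eqn_leq; apply/andP; split.
  by apply/bigmax_leqP => S0 _; apply: path_weight_le.
have [L [h1 h2 h3]] := path_exists w (leqnn n') (leqnn n').
pose S0 : {set 'I_n'.+1} := [set x in ord0 :: L].
have hu : uniq (ord0 :: L).
  by apply: (sorted_uniq (leT := @lto n'.+1)) => // [x y z|x]; [apply: ltn_trans|apply: ltnn].
have hpv : path_vertices S0 = ord0 :: L.
  apply: (sorted_eq (leT := @leo n'.+1)).
  - by move=> x y z; apply: leq_trans.
  - by move=> x y /anti_leq hxy; apply: val_inj.
  - by apply: sort_sorted => i j; apply: leq_total.
  - by apply: (sub_sorted _ h1) => x y; apply: ltnW.
  rewrite perm_sort; apply: uniq_perm => //; first exact: enum_uniq.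
  by move=> x; rewrite mem_enum inE.
have hend : endpoints_in S0.
  apply/forallP => i; apply/implyP => /orP [] /eqP hi; rewrite inE.
    by have -> : i = ord0 by apply: val_inj.
  have -> : i = last ord0 L by apply: val_inj; rewrite /= h2 hi.
  exact: mem_last.
apply: leq_trans (leq_bigmax_cond _ hend).
by rewrite /path_weight hpv /= pw_sum.
Qed.

Definition cnt n (P : pred (weighting n)) : nat := \sum_(w : weighting n) (P w : nat).

Definition toggle n (e : edge n) (w : weighting n) : weighting n :=
  [ffun e' => if e' == e then ~~ w e' else w e'].

Lemma toggleK n (e : edge n) : involutive (toggle e).
Proof.
move=> w; apply/ffunP => e'; rewrite !ffunE.
by case: eqP => [->|_]; rewrite ?eqxx ?negbK // ffunE eqxx.
Qed.

Lemma ewt_toggle n (e : edge n) w x y : (x, y) != val e -> ewt (toggle e w) x y = ewt w x y.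
Proof.
move=> hne; rewrite /ewt; case: insubP => [e' _ he'|] //.
rewrite ffunE; case: eqP => // hee; subst e'.
by rewrite he' eqxx in hne.
Qed.

Lemma ewt_edge n (e : edge n) w : ewt w (val e).1 (val e).2 = w e.
Proof. by rewrite /ewt -surjective_pairing valK. Qed.

Lemma half n (a b : 'I_n) (A : pred (weighting n)) : (a < b)%N ->
  (forall w w', (forall x y, (x, y) != (a, b) -> ewt w x y = ewt w' x y) -> A w = A w') ->
  (cnt (fun w => A w && (ewt w a b == 0))).*2 = cnt A.
Proof.
move=> hab hA.
pose e : edge n := exist _ (a, b) hab.
have hAt w : A (toggle e w) = A w.
  by apply: hA => x y hxy; apply: ewt_toggle.
have hw w : ewt w a b = w e by rewrite -ewt_edge.
have h1 : cnt (fun w => A w && (ewt w a b == 0)) = cnt (fun w => A w && (ewt w a b != 0)).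
  rewrite /cnt (reindex_inj (can_inj (toggleK e))).
  apply: eq_bigr => w _; rewrite hAt !hw ffunE eqxx.
  by case: (w e).
rewrite -addnn {2}h1 /cnt -big_split /=; apply: eq_bigr => w _.
by case: (A w); case: (ewt w a b == 0).
Qed.

Lemma ew_inj n' i j : i <= n' -> j <= n' -> (inord i : 'I_n'.+1) = inord j -> i = j.
Proof. by move=> hi hj /(congr1 val); rewrite /= !inordK. Qed.

Lemma multi n' v (A : pred (weighting n'.+1)) K : v < n' -> K <= v.+1 ->
  (forall w w', (forall x y : 'I_n'.+1, (y <= v)%N -> ewt w x y = ewt w' x y) -> A w = A w') ->
  cnt (fun w => A w && noinc w v K) * 2 ^ K = cnt A.
Proof.
move=> hv; elim: K => [|K IH] hK hA.
  by rewrite muln1; apply: eq_bigr => w _; rewrite andbT.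
rewrite -IH ?(ltnW hK) // expnS mulnA muln2.
congr (_ * _).
have <- := @half _ (inord (v - K)) (inord v.+1) (fun w => A w && noinc w v K).
- by congr (_.*2); apply: eq_bigr => w _ /=; rewrite andbA.
- by rewrite !inordK //; lia.
move=> w w' hw; congr (_ && _).
  apply: hA => x y hy; apply: hw.
  rewrite xpair_eqE negb_and; apply/orP; right; apply/negP => /eqP hy'.
  by move: hy; rewrite hy' inordK //; lia.
apply: noinc_ext => k hk; rewrite /ew; apply: hw.
rewrite xpair_eqE negb_and; apply/orP; left; apply/negP => /eqP hk'.
have := ew_inj (leq_trans (leq_subr _ _) (ltnW hv)) (leq_trans (leq_subr _ _) (ltnW hv)) hk'; lia.
Qed.

Lemma gs_ext n' (w w' : weighting n'.+1) v : v <= n' ->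
  (forall x y : 'I_n'.+1, (y <= v)%N -> ewt w x y = ewt w' x y) -> gs w v = gs w' v.
Proof.
elim: v => [|v IH] // hv h.
rewrite !gsS /S /G IH; first last.
- by move=> x y hy; apply: h; apply: leqW.
- by apply: ltnW.
rewrite (@noinc_ext _ w w') // => k _; apply: h.
by rewrite inordK.
Qed.

Definition E n' v m := fun w : weighting n'.+1 => v - S w v == m.

Lemma E_step n' (w : weighting n'.+1) v m :
  E v.+1 m.+1 w = E v m w && noinc w v m.+1.
Proof.
rewrite /E /S gsS; have hSv := S_le w v; rewrite /S in hSv.
case hn: (noinc w v (v - (gs w v).2).+1) => /=.
  case e: (v - (gs w v).2 == m).
    by move/eqP: e => e; rewrite -e hn subSn // e eqxx.
  by rewrite subSn // eqSS e.
rewrite subnn /=; case e: (v - (gs w v).2 == m) => //=.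
by move/eqP: e => e; rewrite -e hn.
Qed.

Lemma sum_eq1 a k : a < k -> \sum_(m < k) ((a == m) : nat) = 1.
Proof.
move=> ha; rewrite (bigD1 (Ordinal ha)) //= eqxx big1 // => j hj.
case e: (a == j) => //; move/eqP: e => e.
by move: hj; rewrite -(inj_eq val_inj) /= e eqxx.
Qed.

Lemma cnt_part n' v : \sum_(m < v.+1) cnt (@E n' v m) = #|{: weighting n'.+1}|.
Proof.
rewrite /cnt exchange_big /= -sum1_card; apply: eq_bigr => w _.
by apply: sum_eq1; rewrite ltnS leq_subr.
Qed.

Import Order.TTheory GRing.Theory Num.Theory.
Local Open Scope ring_scope.

Fixpoint piv (R : realFieldType) (v m : nat) : R :=
  match v with
  | 0 => (m == 0)%:R
  | v'.+1 => match m with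
             | 0 => 1 - \sum_(j < v'.+1) piv R v' j / 2 ^+ j.+1
             | m'.+1 => piv R v' m' / 2 ^+ m'.+1
             end
  end.

Lemma cnt_E (R : realFieldType) n' v m : (v <= n')%N -> (m <= v)%N ->
  (cnt (@E n' v m))%:R = piv R v m * (#|{: weighting n'.+1}|)%:R.
Proof.
elim: v m => [|v IH] m hv hm.
  move: hm; rewrite leqn0 => /eqP ->; rewrite /= mul1r -sum1_card /cnt.
  by congr (_%:R); apply: eq_bigr => w _; rewrite /E sub0n.
have hv' : (v < n')%N by [].
have hstep m' : (m' <= v)%N -> (cnt (@E n' v.+1 m'.+1))%:R = piv R v m' / 2 ^+ m'.+1 * (#|{: weighting n'.+1}|)%:R.
  move=> hm'.
  have hmu := multi (A := @E n' v m') hv' (hm' : (m'.+1 <= v.+1)%N).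
  have hm2 : (cnt (@E n' v.+1 m'.+1) * 2 ^ m'.+1)%N = cnt (@E n' v m').
    rewrite -hmu; last first.
      by move=> w w' h; rewrite /E /S (gs_ext (ltnW hv') h).
    by congr (_ * _)%N; apply: eq_bigr => w _; rewrite E_step.
  have := congr1 (fun x : nat => x%:R : R) hm2; rewrite natrM natrX IH ?(ltnW hv') //. move=> h.
  rewrite mulrAC -h mulfK //; apply: expf_neq0; by rewrite pnatr_eq0.
case: m hm => [|m'] hm; last by apply: hstep.
have hp := cnt_part n' v.+1.
have := congr1 (fun x : nat => x%:R : R) hp; rewrite /= natr_sum big_ord_recl /=.
under eq_bigr => j _ do rewrite (hstep j (ltn_ord j)).
by move=> h; rewrite mulrBl mul1r mulr_suml -{1}h addrK.
Qed.

Lemma G_sum n' (w : weighting n'.+1) v : G w v = (\sum_(i < v) (S w i.+1 == i.+1 : nat))%N.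
Proof.
elim: v => [|v IH]; first by rewrite big_ord0.
by rewrite big_ord_recr /= G_step IH.
Qed.

Lemma EX_eq (R : realType) n' : EX R n'.+1 = \sum_(i < n') piv R i.+1 0.
Proof.
rewrite /EX.
have hN : (#|{: weighting n'.+1}|%:R : R) != 0.
  by rewrite pnatr_eq0 -lt0n /= card_ffun expn_gt0 card_bool.
apply: (mulIf hN); rewrite mulfVK // mulr_suml -natr_sum.
have -> : (\sum_(w : weighting n'.+1) Xmax w)%N = (\sum_(i < n') cnt (@E n' i.+1 0))%N.
  rewrite /cnt exchange_big /=; apply: eq_bigr => w _.
  rewrite Xmax_eq G_sum; apply: eq_bigr => i _; rewrite /E subn_eq0.
  by rewrite eqn_leq S_le.
rewrite natr_sum; apply: eq_bigr => i _.
by rewrite cnt_E.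
Qed.

Unset Implicit Arguments. Set Strict Implicit.
From mathcomp Require Import ring lra.
Import numFieldNormedType.Exports.
Local Open Scope classical_set_scope.
Local Open Scope ring_scope.
Lemma pi_basic (R : realFieldType) v :
  (forall m, 0 <= piv R v m) /\ \sum_(m < v.+1) piv R v m = 1.
Proof.
elim: v => [|v [IH1 IH2]].
  by split; [move=> m; rewrite /= ler0n | rewrite big_ord_recl big_ord0 /= addr0].
have hle : \sum_(j < v.+1) piv R v j / 2 ^+ j.+1 <= 1.
  rewrite -[X in _ <= X]IH2; apply: ler_sum => j _.
  rewrite -[leRHS]mulr1; apply: ler_wpM2l => //.
  by rewrite invf_le1 ?exprn_gt0 //; apply: exprn_ege1; lra.
split.
  case=> [|m] /=; first by rewrite subr_ge0.
  by apply: divr_ge0 => //; apply: exprn_ge0.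
by rewrite big_ord_recl /= subrK.
Qed.

Definition r (R : realFieldType) (k : nat) : R := (2 : R) ^- 'C(k.+1, 2).

Lemma r0 (R : realFieldType) : r R 0 = 1.
Proof. by rewrite /r bin_small // expr0 invr1. Qed.

Lemma r_succ (R : realFieldType) k : r R k.+1 = r R k / 2 ^+ k.+1.
Proof. by rewrite /r binS bin1 exprD invfM. Qed.

Lemma r_ge0 (R : realFieldType) k : 0 <= r R k.
Proof. by rewrite /r invr_ge0 exprn_ge0. Qed.

Lemma pi_r (R : realFieldType) v m : (m <= v)%N -> piv R v m = piv R (v - m) 0 * r R m.
Proof.
elim: v m => [|v IH] m.
  by rewrite leqn0 => /eqP ->; rewrite r0 mulr1.
case: m => [|m] hm; first by rewrite r0 mulr1 subn0.
by rewrite /= IH // r_succ subSS mulrA.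
Qed.

Definition u (R : realFieldType) v : R := piv R v 0.

Lemma u_ge0 (R : realFieldType) v : 0 <= u R v.
Proof. by have [h _] := pi_basic R v; apply: h. Qed.

Lemma renew (R : realFieldType) v : \sum_(j < v.+1) u R j * r R (v - j) = 1.
Proof.
have [_ h] := pi_basic R v.
rewrite -h -!(big_mkord xpredT) big_nat_rev /=.
rewrite big_mkord; apply: eq_bigr => j _.
by rewrite add0n subSS pi_r ?leq_subr // subKn // -ltnS.
Qed.

Definition RR (R : realFieldType) K : R := \sum_(k < K.+1) r R k.

Lemma RR_succ (R : realFieldType) K : RR R K.+1 = RR R K + r R K.+1.
Proof. by rewrite /RR big_ord_recr. Qed.


Lemma RR0 (R : realFieldType) : RR R 0 = 1.
Proof. by rewrite /RR big_ord_recl big_ord0 addr0 r0. Qed.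

Lemma T_eq (R : realFieldType) N :
  \sum_(j < N.+1) u R j * RR R (N - j) = N.+1%:R.
Proof.
elim: N => [|N IH].
  by rewrite big_ord_recl big_ord0 /u /= RR0 addr0 mulr1.
rewrite big_ord_recr /= subnn.
have := renew R N.+1; rewrite big_ord_recr /= subnn => hren.
have e : \sum_(j < N.+1) u R j * RR R (N.+1 - j) =
   \sum_(j < N.+1) u R j * RR R (N - j) + \sum_(j < N.+1) u R j * r R (N.+1 - j).
  rewrite -big_split; apply: eq_bigr => j _ /=.
  rewrite -mulrDr subSn; last by rewrite -ltnS.
  by rewrite RR_succ.
rewrite e IH RR0 -[N.+2]addn1 natrD.
rewrite r0 in hren. lra.
Qed.

Definition Pn (R : realType) (N : nat) : R := \sum_(1 <= k < N) (2 : R) ^- 'C(k, 2).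

Lemma PnRR (R : realType) K : Pn R K.+2 = RR R K.
Proof. by rewrite /Pn big_add1 /= big_mkord. Qed.

Lemma Pn_mono (R : realType) n : Pn R n <= Pn R n.+1.
Proof.
case: n => [|n]; first by rewrite /Pn !big_geq.
rewrite /Pn [X in _ <= X]big_nat_recr //= lerDl.
by rewrite invr_ge0 exprn_ge0.
Qed.

Lemma RR_le2 (R : realType) K : RR R K + r R K <= 2.
Proof.
elim: K => [|K IH]; first by rewrite RR0 r0; lra.
rewrite RR_succ.
have h : r R K.+1 * 2 = r R K / 2 ^+ K.
  rewrite r_succ exprS invfM; field.
  by rewrite expf_neq0.
have h1 : r R K / 2 ^+ K <= r R K.
  rewrite ler_pdivrMr ?exprn_gt0 //.
  have := r_ge0 R K; have : 1 <= (2 : R) ^+ K by apply: exprn_ege1; lra.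
  nra.
lra.
Qed.

Lemma Pn_le2 (R : realType) n : Pn R n <= 2.
Proof.
case: n => [|[|n]]; first by rewrite /Pn big_geq.
  by rewrite /Pn big_geq.
rewrite PnRR; have := RR_le2 R n; have := r_ge0 R n; lra.
Qed.

Lemma Pn_cvg (R : realType) : cvgn (Pn R).
Proof.
apply: nondecreasing_is_cvgn; first by apply/nondecreasing_seqP => n; apply: Pn_mono.
by exists 2 => _ [n _ <-]; apply: Pn_le2.
Qed.

Lemma RR_le_mu (R : realType) K : RR R K <= limn (Pn R).
Proof.
rewrite -PnRR; apply: nondecreasing_cvgn_le; last exact: Pn_cvg.
by apply/nondecreasing_seqP => n; apply: Pn_mono.
Qed.

Lemma RR_mono (R : realType) K K' : (K <= K')%N -> RR R K <= RR R K'.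
Proof.
move=> h; rewrite -!PnRR.
have : {homo Pn R : n m / (n <= m)%N >-> n <= m} by apply/nondecreasing_seqP => n; apply: Pn_mono.
by apply.
Qed.

Lemma RR_cvg (R : realType) : (fun K => RR R K) @ \oo --> limn (Pn R).
Proof.
have := Pn_cvg R; rewrite -(cvg_shiftn 2) /=.
by under eq_fun => K do rewrite addn2 PnRR.
Qed.

Lemma lowerU (R : realType) M :
  M.+1%:R <= (\sum_(j < M.+1) u R j) * limn (Pn R).
Proof.
rewrite -T_eq mulr_suml; apply: ler_sum => j _.
by apply: ler_wpM2l; [apply: u_ge0 | apply: RR_le_mu].
Qed.

Lemma upperU (R : realType) M K :
  (\sum_(j < M.+1) u R j) * RR R K <= (M + K).+1%:R.
Proof.
rewrite -T_eq mulr_suml.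
rewrite (big_ord_widen _ (fun j => u R j * RR R K) (_ : M.+1 <= (M + K).+1)%N); last by rewrite ltnS leq_addr.
rewrite big_mkcond /=; apply: ler_sum => j _.
case: ifP => hj; last by apply: mulr_ge0; [apply: u_ge0 | have := @RR_mono R 0 (M + K - j) (leq0n _); rewrite RR0; lra].
apply: ler_wpM2l; first by apply: u_ge0.
by apply: RR_mono; lia.
Qed.

Lemma EX_U (R : realType) M : EX R M.+1 = \sum_(j < M.+1) u R j - 1.
Proof. by rewrite EX_eq big_ord_recl [u R ord0 + _]addrC addrK. Qed.

Theorem corollary6 (R : realType) :
  (fun n : nat => EX R n / (n.-1)%:R) @ \oo -->
    (limn (fun N : nat => \sum_(1 <= k < N) (2 : R) ^- 'C(k, 2)))^-1.
Proof.
change ((fun n : nat => EX R n / (n.-1)%:R) @ \oo --> (limn (Pn R))^-1).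
set mu := limn (Pn R).
have mu1 : 1 <= mu by rewrite -(RR0 R); apply: RR_le_mu.
have mu0 : 0 < mu by lra.
have hinv : (fun K => (RR R K)^-1) @ \oo --> mu^-1.
  by apply: cvgV; [rewrite gt_eqF | apply: RR_cvg].
apply/cvgrPdist_lt => e e0.
have e20 : 0 < e / 2 by apply: divr_gt0.
have [K HK] : exists K, `|mu^-1 - (RR R K)^-1| < e / 2.
  move/cvgrPdist_lt : hinv => /(_ _ e20) [N _ HN].
  by exists N; apply: HN => /=.
have RK1 : 1 <= RR R K by rewrite -(RR0 R); apply: RR_mono.
have RK0 : 0 < RR R K by lra.
set a := mu^-1; set b := (RR R K)^-1.
have ha0 : 0 < a by rewrite invr_gt0.
have hb0 : 0 < b by rewrite invr_gt0.
have hab : a <= b by rewrite lef_pV2 ?posrE // RR_le_mu.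
set c := (2 * K.+1%:R * b + 1) / e.
exists (Num.truncn c).+2 => // n /= hn.
have hn1 : n = n.-1.+1 by lia.
set M := n.-1 in hn1 *; rewrite hn1 EX_U /=.
set X := \sum_(j < M.+1) u R j.
have hl := lowerU R M; have hu := upperU R M K; rewrite -/X in hl hu.
have hc : c < M%:R.
  apply: (lt_le_trans (Num.Theory.truncnS_gt c)); rewrite ler_nat; by move: hn; rewrite hn1 ltnS.
have hK1 : 0 <= K.+1%:R :> R by apply: ler0n.
have hm0 : 0 < M%:R :> R.
  apply: le_lt_trans hc; apply: divr_ge0; last lra.
  have : 0 <= K.+1%:R * b by apply: mulr_ge0 => //; lra.
  lra.
have hX1 : M.+1%:R / mu <= X by rewrite ler_pdivrMr.
have hX2 : X <= (M + K).+1%:R / RR R K by rewrite ler_pdivlMr.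
rewrite -/a -/b in hX1 hX2.
have hc' : 2 * K.+1%:R * b + 1 < M%:R * e by rewrite -ltr_pdivrMr.
move: hX1 hX2 hc'; rewrite -[M.+1]addn1 -[(M + K).+1]addn1 -[K.+1]addn1 !natrD.
set m := M%:R; set k := K%:R => hX1 hX2 hc'.
have hk : 0 <= k by apply: ler0n.
have hkb : 0 <= k * b by apply: mulr_ge0 => //; lra.
have hba : b - a < e / 2.
  by have := ler_norm (b - a); rewrite distrC in HK; lra.
have hp : m * (b - a) < m * (e / 2) by rewrite ltr_pM2l.
clear hl hu HK hinv.
rewrite ltr_distlC; apply/andP; split.
  rewrite ltr_pdivlMr //; lra.
rewrite ltr_pdivrMr //; lra.
Qed.
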